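(* Let $\mathbb{Q}=\mathbb{Q}_1\cup\mathbb{Q}_2$ be a partition of the rationals into two disjoint dense sets, and let $f(x)=0$ for $x\in\mathbb{R}\setminus\mathbb{Q}$, $f(x)=1$ for $x\in\mathbb{Q}_1$, $f(x)=2$ for $x\in\mathbb{Q}_2$. Then $f$ has the Baire property, but $f$ is not the pointwise limit of any sequence of Świątkowski functions. Consequently, the class of pointwise limits of sequences of Świątkowski functions is strictly smaller than the class of functions with the Baire property.
   Context: $\mathrm{C}(f)$ denotes the set of continuity points of $f$. $f$ is a Świątkowski function if for all $a<b$ with $f(a)\ne f(b)$ there is $x\in(a,b)\cap\mathrm{C}(f)$ with $f(x)$ strictly between $f(a)$ and $f(b)$. A function has the Baire property if preimages of open sets are of the form $O\triangle M$ with $O$ open and $M$ meager. *)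

(* Defs.v *)
From Stdlib Require Import Reals Rtopology QArith.
Open Scope R_scope.

Definition is_rational (x : R) : Prop := exists q : Q, x = Q2R q.

Definition strictly_between (y a b : R) : Prop :=
  (a < y < b) \/ (b < y < a).

Definition swiatkowski (f : R -> R) : Prop :=
  forall a b : R, a < b -> f a <> f b ->
    exists x : R, a < x < b /\ continuity_pt f x /\ strictly_between (f x) (f a) (f b).

Definition nowhere_dense (A : R -> Prop) : Prop :=
  forall x : R, ~ interior (adherence A) x.

Definition meager (M : R -> Prop) : Prop :=
  exists N : nat -> R -> Prop,
    (forall n, nowhere_dense (N n)) /\ (forall x, M x -> exists n, N n x).

Definition has_Baire_property (f : R -> R) : Prop :=
  forall U : R -> Prop, open_set U ->
    exists O M : R -> Prop, open_set O /\ meager M /\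
      forall x, U (f x) <-> ((O x /\ ~ M x) \/ (M x /\ ~ O x)).

Definition limit_of_swiatkowski (g : R -> R) : Prop :=
  exists fn : nat -> R -> R,
    (forall n, swiatkowski (fn n)) /\ (forall x, Un_cv (fun n => fn n x) (g x)).

(* Main.v *)
Require Import Defs.
From Stdlib Require Import Reals Rtopology QArith Lra Lia Classical ClassicalEpsilon Cantor.
Open Scope R_scope.

Lemma cont_iff f x : continuity_pt f x <-> forall eps, 0 < eps ->
  exists d, 0 < d /\ forall y, Rabs (y - x) < d -> Rabs (f y - f x) < eps.
Proof.
  unfold continuity_pt, continue_in, limit1_in, limit_in, D_x, no_cond; simpl; unfold R_dist.
  split.
  - intros H eps He. destruct (H eps He) as [d [Hd H']]. exists d; split; auto.
    intros y Hy. destruct (Req_dec y x) as [->|Hne].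
    + rewrite Rminus_diag, Rabs_R0; auto.
    + apply H'; split; auto.
  - intros H eps He. destruct (H eps He) as [d [Hd H']]. exists d. split; auto.
    intros y [_ Hy]; auto.
Qed.

Definition enumQ (n:nat) : Q :=
  let (a,b) := Cantor.of_nat n in let (c,d) := Cantor.of_nat a in
  Qmake (Z.of_nat c - Z.of_nat d) (Pos.of_nat b).

Lemma enumQ_surj q : exists n, enumQ n = q.
Proof.
  destruct q as [z p].
  exists (Cantor.to_nat (Cantor.to_nat (Z.to_nat z, Z.to_nat (-z)), Pos.to_nat p)).
  unfold enumQ. rewrite !Cantor.cancel_of_to. rewrite Pos2Nat.id. f_equal. lia.
Qed.

Lemma rat_enum x : is_rational x -> exists n, x = Q2R (enumQ n).
Proof. intros [q ->]. destruct (enumQ_surj q) as [n <-]. eauto. Qed.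

Lemma nd_intro (A : R -> Prop) :
  (forall a b, a < b -> exists c d, a <= c /\ c < d /\ d <= b /\ forall y, c < y < d -> ~ A y) ->
  nowhere_dense A.
Proof.
  intros H x [r Hr]. destruct (H (x - r) (x + r)) as [c [d [H1 [H2 [H3 H4]]]]].
  { pose proof (cond_pos r); lra. }
  set (m := (c + d)/2).
  assert (Hm : adherence A m).
  { apply Hr. unfold disc. pose proof (cond_pos r). apply Rabs_def1; unfold m; lra. }
  assert (Hpos : 0 < (d - c)/2) by lra.
  destruct (Hm (disc m (mkposreal _ Hpos))) as [y [Hy1 Hy2]].
  { exists (mkposreal _ Hpos). intros z Hz; exact Hz. }
  unfold disc in Hy1; simpl in Hy1. apply Rabs_def2 in Hy1.
  apply (H4 y); auto. unfold m in Hy1; lra.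
Qed.

Lemma nd_empty : nowhere_dense (fun _ => False).
Proof. apply nd_intro. intros a b Hab. exists a, b. repeat split; try lra. auto. Qed.

Lemma nd_single z : nowhere_dense (fun x => x = z).
Proof.
  apply nd_intro. intros a b Hab.
  destruct (Rlt_or_le z ((a+b)/2)).
  - exists ((a+b)/2), b. repeat split; try lra. intros y Hy ->. lra.
  - exists a, ((a+b)/2). repeat split; try lra. intros y Hy ->. lra.
Qed.

Lemma meager_sub (A B : R -> Prop) : meager B -> (forall x, A x -> B x) -> meager A.
Proof. intros [N [H1 H2]] H. exists N; split; auto. Qed.

Lemma meager_empty : meager (fun _ => False).
Proof. exists (fun _ _ => False). split; [intros; apply nd_empty| intros x []]. Qed.

Lemma meager_Union (M : nat -> R -> Prop) : (forall k, meager (M k)) ->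
  meager (fun x => exists k, M k x).
Proof.
  intros H.
  set (N := fun k => proj1_sig (constructive_indefinite_description _ (H k))).
  assert (HN : forall k, (forall n, nowhere_dense (N k n)) /\ (forall x, M k x -> exists n, N k n x)).
  { intros k. unfold N. destruct (constructive_indefinite_description _ (H k)); simpl; auto. }
  exists (fun m => let (k,n) := Cantor.of_nat m in N k n). split.
  - intros m. destruct (Cantor.of_nat m) as [k n]. apply HN.
  - intros x [k Hk]. destruct (proj2 (HN k) x Hk) as [n Hn].
    exists (Cantor.to_nat (k,n)). rewrite Cantor.cancel_of_to. exact Hn.
Qed.

Lemma meager_union2 (A B : R -> Prop) : meager A -> meager B -> meager (fun x => A x \/ B x).
Proof.
  intros HA HB. apply meager_sub with (fun x => exists k, (match k with O => A | _ => B end) x).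
  - apply meager_Union. intros [|k]; auto.
  - intros x [h|h]; [exists 0%nat | exists 1%nat]; auto.
Qed.

Lemma meager_rat : meager is_rational.
Proof.
  exists (fun n x => x = Q2R (enumQ n)). split.
  - intros n. apply nd_single.
  - apply rat_enum.
Qed.

Definition BPs (A : R -> Prop) : Prop :=
  exists O M, open_set O /\ meager M /\ forall x, ~ M x -> (A x <-> O x).

Lemma BPs_HBP f : (forall U, open_set U -> BPs (fun x => U (f x))) -> has_Baire_property f.
Proof.
  intros H U HU. destruct (H U HU) as [O [M [HO [HM Hx]]]].
  exists O, (fun x => M x /\ ~ (U (f x) <-> O x)). split; auto. split.
  - apply meager_sub with M; auto. intros x [h _]; auto.
  - intros x. destruct (classic (M x /\ ~ (U (f x) <-> O x))) as [h|h].
    + destruct h as [h1 h2]. destruct (classic (U (f x))) as [hu|hu];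
      destruct (classic (O x)) as [ho|ho]; try (exfalso; apply h2; tauto).
      * split; intros _; [right|]; auto.
      * split; [intros; exfalso; auto|]. intros [[a b]|[a b]]; [|contradiction]. exfalso; apply b; auto.
    + assert (E : U (f x) <-> O x).
      { destruct (classic (M x)) as [m|m]; [|auto]. destruct (classic (U (f x) <-> O x)); tauto. }
      split.
      * intros u. left. tauto.
      * intros [[o _]|[hh _]]; [tauto| contradiction].
Qed.

Lemma BPs_ext (A B : R -> Prop) : (forall x, A x <-> B x) -> BPs A -> BPs B.
Proof.
  intros E [O [M [H1 [H2 H3]]]]. exists O, M. repeat split; auto.
  - intros; apply H3; auto; apply E; auto.
  - intros; apply E, H3; auto.
Qed.

Lemma BPs_open O : open_set O -> BPs O.
Proof. intros H. exists O, (fun _ => False). repeat split; auto using meager_empty. Qed.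

Lemma nbhd_iff (V : R -> Prop) x : neighbourhood V x <-> exists r, 0 < r /\ forall y, Rabs (y - x) < r -> V y.
Proof.
  split.
  - intros [r Hr]. exists r. split; [apply cond_pos|]. intros y Hy; apply Hr; exact Hy.
  - intros [r [Hr H]]. exists (mkposreal r Hr). intros y Hy; apply H; exact Hy.
Qed.

Lemma nd_boundary (F : R -> Prop) :
  (forall y, ~ F y -> exists r, 0 < r /\ forall z, Rabs (z - y) < r -> ~ F z) ->
  nowhere_dense (fun x => F x /\ ~ interior F x).
Proof.
  intros HF. apply nd_intro. intros a b Hab.
  destruct (classic (forall y, a < y < b -> F y)) as [H|H].
  - exists a, b. repeat split; try lra. intros y Hy [_ Hi]. apply Hi.
    apply nbhd_iff. exists (Rmin (y - a) (b - y)). split.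
    + apply Rmin_glb_lt; lra.
    + intros z Hz. apply H. apply Rabs_def2 in Hz.
      pose proof (Rmin_l (y-a) (b-y)); pose proof (Rmin_r (y-a) (b-y)); lra.
  - apply not_all_ex_not in H. destruct H as [y Hy].
    apply imply_to_and in Hy. destruct Hy as [Hy1 Hy2].
    destruct (HF y Hy2) as [r [Hr Hz]].
    set (s := Rmin r (Rmin (y - a) (b - y))).
    assert (Hs1 : s <= r) by apply Rmin_l.
    assert (Hs2 : s <= y - a) by (eapply Rle_trans; [apply Rmin_r| apply Rmin_l]).
    assert (Hs3 : s <= b - y) by (eapply Rle_trans; [apply Rmin_r| apply Rmin_r]).
    assert (Hs0 : 0 < s) by (apply Rmin_glb_lt; [lra| apply Rmin_glb_lt; lra]).
    exists (y - s/2), (y + s/2). repeat split; try lra.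
    intros w Hw [Fw _]. apply (Hz w); auto. apply Rabs_def1; lra.
Qed.

Lemma BPs_compl A : BPs A -> BPs (fun x => ~ A x).
Proof.
  intros [O [M [HO [HM H]]]].
  exists (interior (fun x => ~ O x)), (fun x => M x \/ (~ O x /\ ~ interior (fun x => ~ O x) x)).
  split; [apply interior_P3|]. split.
  - apply meager_union2; auto. exists (fun _ x => ~ O x /\ ~ interior (fun x => ~ O x) x).
    split; [|intros x0 hx; exists 0%nat; exact hx]. intros _. apply nd_boundary. intros y Hy.
    apply NNPP in Hy. destruct (HO y Hy) as [r Hr]. exists r. split; [apply cond_pos|].
    intros z Hz Hn. apply Hn. apply Hr. exact Hz.
  - intros x Hx. apply not_or_and in Hx. destruct Hx as [Hm Hb].
    rewrite (H x Hm). split.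
    + intros Ho. destruct (classic (interior (fun x => ~ O x) x)); auto. exfalso; apply Hb; auto.
    + intros Hi. apply (interior_P1 _ x Hi).
Qed.

Lemma BPs_Union (A : nat -> R -> Prop) : (forall n, BPs (A n)) -> BPs (fun x => exists n, A n x).
Proof.
  intros H.
  set (P := fun n => proj1_sig (constructive_indefinite_description _ (H n))).
  assert (HP : forall n, exists M, open_set (P n) /\ meager M /\ forall x, ~ M x -> (A n x <-> P n x)).
  { intros n. unfold P. destruct (constructive_indefinite_description _ (H n)); simpl; auto. }
  set (Mf := fun n => proj1_sig (constructive_indefinite_description _ (HP n))).
  assert (HM : forall n, open_set (P n) /\ meager (Mf n) /\ forall x, ~ Mf n x -> (A n x <-> P n x)).
  { intros n. unfold Mf. destruct (constructive_indefinite_description _ (HP n)); simpl; auto. }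
  exists (fun x => exists n, P n x), (fun x => exists n, Mf n x). split; [|split].
  - intros x [n Hn]. destruct (proj1 (HM n) x Hn) as [r Hr]. exists r. intros y Hy. exists n. apply Hr, Hy.
  - apply meager_Union. intros n; apply HM.
  - intros x Hx. split.
    + intros [n Hn]. exists n. apply (proj2 (proj2 (HM n)) x); auto. intro; apply Hx; eauto.
    + intros [n Hn]. exists n. apply (proj2 (proj2 (HM n)) x); auto. intro; apply Hx; eauto.
Qed.

Lemma BPs_Inter (A : nat -> R -> Prop) : (forall n, BPs (A n)) -> BPs (fun x => forall n, A n x).
Proof.
  intros H. apply BPs_ext with (fun x => ~ exists n, ~ A n x).
  - intros x. split.
    + intros h n. apply NNPP. intro; apply h; eauto.
    + intros h [n hn]. auto.
  - apply BPs_compl, BPs_Union. intros n; apply BPs_compl, H.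
Qed.

Lemma small_inv eps : 0 < eps -> exists n, / (INR n + 1) < eps.
Proof.
  intros He. destruct (archimed_cor1 eps He) as [N [H1 H2]]. exists N.
  apply Rle_lt_trans with (/ INR N); auto.
  assert (0 < INR N) by (apply lt_0_INR; lia).
  apply Rlt_le, Rinv_lt_contravar; [nra| lra].
Qed.

Lemma inv_pos n : 0 < / (INR n + 1).
Proof. apply Rinv_0_lt_compat. pose proof (pos_INR n); lra. Qed.

Lemma swi_dense f a b : swiatkowski f -> a < b -> exists c, a < c < b /\ continuity_pt f c.
Proof.
  intros Hs Hab.
  destruct (classic (exists u v, a < u /\ u < v /\ v < b /\ f u <> f v)) as [[u [v [h1 [h2 [h3 h4]]]]]|H].
  - destruct (Hs u v h2 h4) as [c [hc [hc2 _]]]. exists c; split; auto; lra.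
  - set (m := (a+b)/2). exists m. split; [unfold m; lra|].
    assert (Hc : forall y, a < y < b -> f y = f m).
    { intros y Hy. destruct (Rtotal_order y m) as [h|[h|h]].
      - apply NNPP. intro hn. apply H. exists y, m. unfold m in *; repeat split; lra || auto.
      - subst; auto.
      - apply NNPP. intro hn. apply H. exists m, y. unfold m in *; repeat split; try lra; auto. }
    apply cont_iff. intros eps He. exists (Rmin (m - a) (b - m)). split.
    + apply Rmin_glb_lt; unfold m; lra.
    + intros y Hy. apply Rabs_def2 in Hy.
      pose proof (Rmin_l (m-a) (b-m)); pose proof (Rmin_r (m-a) (b-m)).
      rewrite Hc; [|lra]. rewrite Rminus_diag, Rabs_R0; auto.
Qed.

Definition oscN (f : R -> R) (n : nat) (x : R) : Prop :=
  ~ exists d, 0 < d /\ forall y z, Rabs (y - x) < d -> Rabs (z - x) < d ->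
      Rabs (f y - f z) < / (INR n + 1).

Lemma swi_meager f : swiatkowski f -> meager (fun x => ~ continuity_pt f x).
Proof.
  intros Hs. exists (oscN f). split.
  - intros n. apply nd_intro. intros a b Hab.
    destruct (swi_dense f a b Hs Hab) as [c [Hc Hcc]].
    set (e := / (INR n + 1)). assert (He : 0 < e) by apply inv_pos.
    destruct (proj1 (cont_iff f c) Hcc (e/3)) as [d [Hd Hdd]]; [lra|].
    set (r := Rmin d (Rmin (c - a) (b - c)) / 2).
    assert (Hr1 : 2 * r <= d) by (unfold r; pose proof (Rmin_l d (Rmin (c-a) (b-c))); lra).
    assert (Hr2 : 2 * r <= c - a) by (unfold r; pose proof (Rmin_r d (Rmin (c-a) (b-c)));
       pose proof (Rmin_l (c-a) (b-c)); lra).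
    assert (Hr3 : 2 * r <= b - c) by (unfold r; pose proof (Rmin_r d (Rmin (c-a) (b-c)));
       pose proof (Rmin_r (c-a) (b-c)); lra).
    assert (Hr0 : 0 < r) by (unfold r; assert (0 < Rmin d (Rmin (c-a) (b-c))) by
       (apply Rmin_glb_lt; [lra| apply Rmin_glb_lt; lra]); lra).
    exists (c - r), (c + r). repeat split; try lra.
    intros y Hy Hn. apply Hn. exists r. split; auto. intros z w Hz Hw.
    apply Rabs_def2 in Hz. apply Rabs_def2 in Hw.
    assert (A1 : Rabs (f z - f c) < e/3) by (apply Hdd; apply Rabs_def1; lra).
    assert (A2 : Rabs (f w - f c) < e/3) by (apply Hdd; apply Rabs_def1; lra).
    apply Rabs_def2 in A1. apply Rabs_def2 in A2. fold e. apply Rabs_def1; lra.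
  - intros x Hx. apply NNPP. intro Hn. apply Hx. apply cont_iff. intros eps He.
    destruct (small_inv eps He) as [n Hn2].
    assert (Ho : ~ oscN f n x) by (intro; apply Hn; eauto).
    unfold oscN in Ho. apply NNPP in Ho. destruct Ho as [d [Hd H]].
    exists d. split; auto. intros y Hy. eapply Rlt_trans; [|exact Hn2]. apply H; auto; rewrite Rminus_diag, Rabs_R0; auto.
Qed.

Lemma swi_BPs f V : swiatkowski f -> open_set V -> BPs (fun x => V (f x)).
Proof.
  intros Hs HV. exists (interior (fun x => V (f x))), (fun x => ~ continuity_pt f x).
  split; [apply interior_P3|]. split; [apply swi_meager; auto|].
  intros x Hx. apply NNPP in Hx. split.
  - intros Hv. destruct (proj1 (nbhd_iff V (f x)) (HV _ Hv)) as [r [Hr Hb]].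
    destruct (proj1 (cont_iff f x) Hx r Hr) as [d [Hd Hdd]].
    apply nbhd_iff. exists d. split; auto.
  - intros Hi. apply (interior_P1 _ x Hi).
Qed.

Lemma limit_BP g : limit_of_swiatkowski g -> has_Baire_property g.
Proof.
  intros [fn [Hs Hc]]. apply BPs_HBP. intros U HU.
  set (S := fun k y => forall z, Rabs (z - y) < / (INR k + 1) -> U z).
  apply BPs_ext with (fun x => exists k, exists m, forall j, S k (fn (m + j)%nat x)).
  - intros x. split.
    + intros [k [m H]]. destruct (Hc x (/ (INR k + 1)) (inv_pos k)) as [N HN].
      apply (H N). unfold R_dist in HN. rewrite Rabs_minus_sym. apply HN. lia.
    + intros Hu. destruct (proj1 (nbhd_iff U (g x)) (HU _ Hu)) as [r [Hr Hb]].
      destruct (small_inv (r/2)) as [k Hk]; [lra|]. exists k.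
      destruct (Hc x (r/2)) as [N HN]; [lra|]. exists N. intros j z Hz.
      apply Hb. assert (R_dist (fn (N + j)%nat x) (g x) < r/2) by (apply HN; lia).
      unfold R_dist in H. apply Rabs_def2 in H. apply Rabs_def2 in Hz. apply Rabs_def1; lra.
  - apply BPs_Union. intros k. apply BPs_Union. intros m. apply BPs_Inter. intros j.
    apply BPs_ext with (fun x => ~ (fun y => ~ S k y) (fn (m + j)%nat x)).
    { intros x. split; [apply NNPP| auto]. }
    apply BPs_compl. apply (swi_BPs (fn (m + j)%nat) (fun y => ~ S k y)); auto.
    intros y Hy. unfold S in Hy. apply not_all_ex_not in Hy. destruct Hy as [z Hz].
    apply imply_to_and in Hz. destruct Hz as [Hz1 Hz2].
    apply nbhd_iff. exists (/ (INR k + 1) - Rabs (z - y)). split; [lra|].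
    intros y' Hy' Hs'. apply Hz2, Hs'.
    assert (T : Rabs (z - y') <= Rabs (z - y) + Rabs (y - y')) by
      (replace (z - y') with ((z - y) + (y - y')) by ring; apply Rabs_triang).
    rewrite (Rabs_minus_sym y y') in T. lra.
Qed.

Definition Good (fn : nat -> R -> R) (k : nat) (a b : R) (N : nat) (t : R * R * nat) : Prop :=
  a < fst (fst t) /\ fst (fst t) < snd (fst t) /\ snd (fst t) < b /\ (N <= snd t)%nat /\
  (forall y, fst (fst t) <= y <= snd (fst t) -> 1/2 < fn (snd t) y) /\
  ~ (fst (fst t) <= Q2R (enumQ k) <= snd (fst t)).

Section S.
Variables (Q1 Q2 : R -> Prop)
  (hdisj : forall x, ~ (Q1 x /\ Q2 x))
  (hdense1 : forall a b, a < b -> exists q, Q1 q /\ a < q < b)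
  (hdense2 : forall a b, a < b -> exists q, Q2 q /\ a < q < b)
  (f : R -> R)
  (hf1 : forall x, Q1 x -> f x = 1)
  (hf2 : forall x, Q2 x -> f x = 2)
  (fn : nat -> R -> R) (Hs : forall n, swiatkowski (fn n))
  (Hc : forall x, Un_cv (fun n => fn n x) (f x)).

Lemma step_ex k a b N : exists t, a < b -> Good fn k a b N t.
Proof.
  destruct (classic (a < b)) as [Hab|Hab]; [|exists (0,0,0%nat); intros; contradiction].
  set (q := Q2R (enumQ k)).
  assert (Hab' : exists a' b', a <= a' /\ a' < b' /\ b' <= b /\ (q <= a' \/ b' <= q)).
  { destruct (Rle_or_lt q ((a+b)/2)).
    - exists ((a+b)/2), b. repeat split; try lra; auto.
    - exists a, ((a+b)/2). repeat split; try lra; right; lra. }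
  destruct Hab' as [a' [b' [h1 [h2 [h3 h4]]]]].
  destruct (hdense1 a' b' h2) as [q1 [Hq1 Hq1']].
  destruct (hdense2 a' b' h2) as [q2 [Hq2 Hq2']].
  destruct (Hc q1 (1/4)) as [N1 HN1]; [lra|].
  destruct (Hc q2 (1/4)) as [N2 HN2]; [lra|].
  unfold R_dist in HN1, HN2. set (n := Nat.max N (Nat.max N1 N2)).
  pose proof (HN1 n ltac:(unfold n; lia)) as E1. rewrite (hf1 q1 Hq1) in E1.
  pose proof (HN2 n ltac:(unfold n; lia)) as E2. rewrite (hf2 q2 Hq2) in E2.
  apply Rabs_def2 in E1. apply Rabs_def2 in E2.
  assert (Hx : exists x, a' < x < b' /\ continuity_pt (fn n) x /\ 3/4 < fn n x).
  { destruct (Rtotal_order q1 q2) as [l|[e|l]].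
    - destruct (Hs n q1 q2 l) as [x [hx1 [hx2 hx3]]]; [lra|].
      exists x. split; [lra|]. split; auto. destruct hx3; lra.
    - subst. exfalso; apply (hdisj q2); auto.
    - destruct (Hs n q2 q1 l) as [x [hx1 [hx2 hx3]]]; [lra|].
      exists x. split; [lra|]. split; auto. destruct hx3; lra. }
  destruct Hx as [x [Hx1 [Hx2 Hx3]]].
  destruct (proj1 (cont_iff (fn n) x) Hx2 (1/4)) as [d [Hd Hdd]]; [lra|].
  set (r := Rmin d (Rmin (x - a') (b' - x)) / 2).
  assert (Hr1 : 2 * r <= d) by (unfold r; pose proof (Rmin_l d (Rmin (x-a') (b'-x))); lra).
  assert (Hr2 : 2 * r <= x - a') by (unfold r; pose proof (Rmin_r d (Rmin (x-a') (b'-x)));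
     pose proof (Rmin_l (x-a') (b'-x)); lra).
  assert (Hr3 : 2 * r <= b' - x) by (unfold r; pose proof (Rmin_r d (Rmin (x-a') (b'-x)));
     pose proof (Rmin_r (x-a') (b'-x)); lra).
  assert (Hr0 : 0 < r) by (unfold r; assert (0 < Rmin d (Rmin (x-a') (b'-x))) by
     (apply Rmin_glb_lt; [lra| apply Rmin_glb_lt; lra]); lra).
  exists (x - r, x + r, n). intros _. unfold Good; simpl.
  split; [lra|]. split; [lra|]. split; [lra|]. split; [unfold n; lia|]. split.
  - intros y Hy. assert (Rabs (fn n y - fn n x) < 1/4) by (apply Hdd; apply Rabs_def1; lra).
    apply Rabs_def2 in H. lra.
  - fold q. lra.
Qed.

Definition stepf k a b N : R * R * nat :=
  proj1_sig (constructive_indefinite_description _ (step_ex k a b N)).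

Lemma stepf_spec k a b N : a < b -> Good fn k a b N (stepf k a b N).
Proof. unfold stepf. destruct (constructive_indefinite_description _ (step_ex k a b N)); auto. Qed.

Fixpoint st (k : nat) : R * R * nat :=
  match k with
  | O => (0, 1, 0%nat)
  | S k => let s := stepf k (fst (fst (st k))) (snd (fst (st k))) (snd (st k)) in
           (fst (fst s), snd (fst s), S (snd s))
  end.

Definition Ak k := fst (fst (st k)).
Definition Bk k := snd (fst (st k)).
Definition Nk k := snd (st k).
Definition sk k := stepf k (Ak k) (Bk k) (Nk k).

Lemma AB_lt k : Ak k < Bk k /\ Good fn k (Ak k) (Bk k) (Nk k) (sk k).
Proof.
  induction k.
  - assert (H : Ak 0 < Bk 0) by (unfold Ak, Bk; simpl; lra). split; auto. apply stepf_spec; auto.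
  - destruct IHk as [_ G].
    assert (H : Ak (S k) < Bk (S k)) by (unfold Ak, Bk; simpl; destruct G as [_ [g _]]; exact g).
    split; auto. apply stepf_spec; auto.
Qed.

Lemma AS k : Ak (S k) = fst (fst (sk k)). Proof. reflexivity. Qed.
Lemma BS k : Bk (S k) = snd (fst (sk k)). Proof. reflexivity. Qed.
Lemma NS k : Nk (S k) = S (snd (sk k)). Proof. reflexivity. Qed.

Lemma A_mono j k : (j <= k)%nat -> Ak j <= Ak k.
Proof.
  induction 1; [lra|]. destruct (AB_lt m) as [_ [g _]]. rewrite AS. lra.
Qed.
Lemma B_mono j k : (j <= k)%nat -> Bk k <= Bk j.
Proof.
  induction 1; [lra|]. destruct (AB_lt m) as [_ [_ [_ [g _]]]]. rewrite BS. lra.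
Qed.
Lemma N_ge k : (k <= Nk k)%nat.
Proof.
  induction k; [lia|]. destruct (AB_lt k) as [_ [_ [_ [_ [g _]]]]]. rewrite NS. lia.
Qed.

Lemma A_le_B j k : Ak j <= Bk k.
Proof.
  pose proof (A_mono j (Nat.max j k) ltac:(lia)).
  pose proof (B_mono k (Nat.max j k) ltac:(lia)).
  pose proof (proj1 (AB_lt (Nat.max j k))). lra.
Qed.

Lemma contra (hf0 : forall x, ~ is_rational x -> f x = 0) : False.
Proof.
  destruct (completeness (fun y => exists j, y = Ak j)) as [x [Hx1 Hx2]].
  - exists (Bk 0). intros y [j ->]. apply A_le_B.
  - exists (Ak 0); eauto.
  - assert (L : forall j, Ak j <= x) by (intros j; apply Hx1; eauto).
    assert (U : forall k, x <= Bk k) by (intros k; apply Hx2; intros y [j ->]; apply A_le_B).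
    assert (Hirr : ~ is_rational x).
    { intros Hr. destruct (rat_enum x Hr) as [k Hk].
      destruct (AB_lt k) as [_ [_ [_ [_ [_ [_ g]]]]]]. apply g. rewrite <- AS, <- BS, <- Hk. auto. }
    destruct (Hc x (1/2)) as [M HM]; [lra|].
    destruct (AB_lt M) as [_ [_ [_ [_ [g1 [g2 _]]]]]].
    pose proof (N_ge M).
    assert (R1 : R_dist (fn (snd (sk M)) x) (f x) < 1/2) by (apply HM; lia).
    rewrite (hf0 x Hirr) in R1. unfold R_dist in R1. apply Rabs_def2 in R1.
    assert (1/2 < fn (snd (sk M)) x) by (apply g2; rewrite <- AS, <- BS; auto).
    lra.
Qed.
End S.

Theorem mainTheorem8
  (Q1 Q2 : R -> Prop)
  (hpart : forall x, is_rational x <-> (Q1 x \/ Q2 x))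
  (hdisj : forall x, ~ (Q1 x /\ Q2 x))
  (hdense1 : forall a b, a < b -> exists q, Q1 q /\ a < q < b)
  (hdense2 : forall a b, a < b -> exists q, Q2 q /\ a < q < b)
  (f : R -> R)
  (hf0 : forall x, ~ is_rational x -> f x = 0)
  (hf1 : forall x, Q1 x -> f x = 1)
  (hf2 : forall x, Q2 x -> f x = 2) :
  has_Baire_property f /\ ~ limit_of_swiatkowski f /\
  (forall g, limit_of_swiatkowski g -> has_Baire_property g).
Proof.
  split; [|split].
  - apply BPs_HBP. intros U HU. destruct (classic (U 0)) as [h|h].
    + exists (fun _ => True), is_rational. split; [apply open_set_P5|]. split; [apply meager_rat|].
      intros x Hx. rewrite (hf0 x Hx). tauto.
    + exists (fun _ => False), is_rational. split; [apply open_set_P4|]. split; [apply meager_rat|].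
      intros x Hx. rewrite (hf0 x Hx). tauto.
  - intros [fn [Hs Hc]]. exact (contra Q1 Q2 hdisj hdense1 hdense2 f hf1 hf2 fn Hs Hc hf0).
  - exact limit_BP.
Qed.
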